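(* (a) $\mathcal{L}\cap\mathcal{U}=\mathcal{C}$. (b) If $A\subseteq\Omega$ satisfies $A\in\mathcal{L}$ and $\Omega\setminus A\in\mathcal{L}$, then $A\in\mathcal{C}$.
   Context: $\Omega$ is the set of infinite sequences $\alpha_0\alpha_1\alpha_2\cdots$ with $\alpha_k\in\{0,1\}$ and $\alpha_0=0$. $\mathcal{C}$ is the collection of cylinder sets, i.e. sets of the form $\{\alpha_0\alpha_1\cdots\in\Omega:\alpha_0\cdots\alpha_n\in E\}$ for some $n\ge1$ and some set $E$ of strings $\alpha_0\cdots\alpha_n$ with $\alpha_0=0$. For $A\subseteq\Omega$ and $n\ge0$, $A^{(n)}=\{\omega\in\Omega:\text{some }\omega'\in A\text{ has the same first }n+1\text{ entries as }\omega\}$. $\mathcal{L}$ is the collection of lower sets, those $A$ with $A=\bigcap_nA^{(n)}$; $\mathcal{U}$ is the collection of upper sets, those $A$ with $A=\bigcup_n\big(\Omega\setminus(\Omega\setminus A)^{(n)}\big)$. *)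

(* Defs.v *)
From mathcomp Require Import all_boot.
From mathcomp Require Import boolp classical_sets.
Set Implicit Arguments. Unset Strict Implicit. Unset Printing Implicit Defensive.
Local Open Scope classical_set_scope.

(* Omega: infinite 0/1 sequences (as nat -> bool, false = 0) with alpha_0 = 0. *)
Definition Omega : set (nat -> bool) := [set w | w 0%N = false].

Definition prefix (w : nat -> bool) (n : nat) : seq bool :=
  [seq w i | i <- iota 0 n.+1].

Definition cylinder (A : set (nat -> bool)) : Prop :=
  exists (n : nat) (E : set (seq bool)),
    (1 <= n)%N /\
    (forall s, E s -> size s = n.+1 /\ head true s = false) /\
    A = [set w | Omega w /\ E (prefix w n)].

Definition approx (A : set (nat -> bool)) (n : nat) : set (nat -> bool) :=
  [set w | Omega w /\ exists w', A w' /\ forall i, (i <= n)%N -> w i = w' i].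

Definition lower (A : set (nat -> bool)) : Prop :=
  A = \bigcap_(n in [set: nat]) approx A n.

Definition upper (A : set (nat -> bool)) : Prop :=
  A = \bigcup_(n in [set: nat]) (Omega `\` approx (Omega `\` A) n).

(* Main.v *)
Require Import Defs.
From mathcomp Require Import all_boot.
From mathcomp Require Import boolp classical_sets.
From Stdlib Require Import Classical Lia.
From mathcomp Require Import zify.
Local Open Scope classical_set_scope.

Definition agree (w v : nat -> bool) m := forall i, (i <= m)%N -> w i = v i.

Definition good (A : set (nat -> bool)) k f := exists m, forall w v,
  Omega w -> Omega v -> agree w f k -> agree v f k -> agree w v m -> (A w <-> A v).

Definition upd (f : nat -> bool) k b := fun i => if i == k then b else f i.

Fixpoint FF A k := match k with
  | 0 => fun _ => false
  | k.+1 => upd (FF A k) k.+1 (~~ asbool (~ good A k.+1 (upd (FF A k) k.+1 false)))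
  end.

Lemma step A k f : good A k.+1 (upd f k.+1 false) -> good A k.+1 (upd f k.+1 true)
  -> good A k f.
Proof.
move=> [m0 H0] [m1 H1]; exists (maxn (maxn m0 m1) k.+1) => w v Ow Ov wf vf wv.
have wvk : w k.+1 = v k.+1 by apply: wv; rewrite leq_max leqnn orbT.
have ext : forall u, agree u f k -> agree u (upd f k.+1 (u k.+1)) k.+1.
  move=> u uf i ik; rewrite /upd; case: eqP => [->//|ne]; apply: uf.
  by move: ik; rewrite leq_eqVlt => /orP[/eqP//|].
case Ew: (w k.+1).
- apply: H1 => //; first by rewrite -Ew; apply: ext.
  + by rewrite -Ew wvk; apply: ext.
  + move=> i im; apply: wv; apply: (leq_trans im); rewrite !leq_max leqnn; lia.
- apply: H0 => //; first by rewrite -Ew; apply: ext.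
  + by rewrite -Ew wvk; apply: ext.
  + move=> i im; apply: wv; apply: (leq_trans im); rewrite !leq_max leqnn; lia.
Qed.

Lemma FF_bad A : ~ good A 0 (FF A 0) -> forall k, ~ good A k (FF A k).
Proof.
move=> H0; elim=> [//|k IH] /=.
case: (asboolP (~ good A k.+1 (upd (FF A k) k.+1 false))) => [//|Hg] /=.
move=> Hg1; apply: IH; apply: step => //; exact: (contrapT Hg).
Qed.

Lemma FF_stable A i d : FF A (i + d) i = FF A i i.
Proof.
elim: d => [|d IH]; first by rewrite addn0.
rewrite addnS /= /upd; case: eqP => [e|_//]; lia.
Qed.

Lemma key (A : set (nat -> bool)) :
  (forall p, Omega p -> ~ A p -> exists m, forall w, Omega w -> agree w p m -> ~ A w) ->
  (forall p, A p -> exists m, forall w, Omega w -> agree w p m -> A w) ->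
  A `<=` Omega ->
  exists m, forall w v, Omega w -> Omega v -> agree w v m -> (A w <-> A v).
Proof.
move=> H1 H2 AO.
have : good A 0 (FF A 0).
  apply: NNPP => Hb.
  pose p i := FF A i i.
  have pa : forall k, agree p (FF A k) k.
    move=> k i ik; rewrite /p -(subnKC ik) FF_stable //.
  have Op : Omega p by [].
  have agr : forall w k, agree w (FF A k) k -> agree w p k.
    by move=> w k wk i ik; rewrite wk // (pa k).
  case: (classic (A p)) => Ap.
  - have [m Hm] := H2 p Ap; apply: (FF_bad _ Hb m); exists m => w v Ow Ov wf vf _.
    by split=> _; apply: Hm => //; apply: agr.
  - have [m Hm] := H1 p Op Ap; apply: (FF_bad _ Hb m); exists m => w v Ow Ov wf vf _.
    split=> Hx; exfalso; [apply: (Hm w)|apply: (Hm v)] => //; apply: agr; eauto.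
move=> [m Hm]; exists m => w v Ow Ov wv; apply: Hm => //.
- by move=> i; rewrite leqn0 => /eqP ->.
- by move=> i; rewrite leqn0 => /eqP ->.
Qed.

Lemma nth_prefix w n i : (i <= n)%N -> nth false (Defs.prefix w n) i = w i.
Proof.
move=> H; rewrite /Defs.prefix (nth_map 0%N); last by rewrite size_iota.
by rewrite nth_iota.
Qed.

Lemma prefix_agree w v n : Defs.prefix w n = Defs.prefix v n <-> agree w v n.
Proof.
split.
- by move=> E i H; rewrite -(nth_prefix w n i H) -(nth_prefix v n i H) E.
- move=> H; apply/eq_in_map => i; rewrite mem_iota add0n => /andP[_ ?]; by apply: H.
Qed.

Lemma key_cyl (A : set (nat -> bool)) : A `<=` Omega ->
  (exists m, forall w v, Omega w -> Omega v -> agree w v m -> (A w <-> A v)) ->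
  cylinder A.
Proof.
move=> AO [m Hm].
exists (maxn m 1), [set s | exists v, A v /\ s = Defs.prefix v (maxn m 1)]; split.
  by rewrite leq_max orbT.
split.
  by move=> s [v [Av ->]]; rewrite /Defs.prefix size_map size_iota; split=> //=; apply: AO.
apply/seteqP; split => w /=.
  by move=> Aw; split; [apply: AO|exists w].
move=> [Ow [v [Av /prefix_agree E]]].
apply/(Hm w v) => //; first by apply: AO.
by move=> i im; apply: E; apply: (leq_trans im); rewrite leq_max leqnn.
Qed.

Lemma not_approx_compl (A : set (nat -> bool)) p :
  (exists n, ~ approx (Omega `\` A) n p) ->
  exists m, forall w, Omega w -> agree w p m -> A w.
Proof.
move=> [n Hn]; exists n => w Ow wp; apply: NNPP => nA; apply: Hn; split.
  by move: (wp 0%N (leq0n _)) Ow; rewrite /Omega /= => <-.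
by exists w; split => // i ih; rewrite wp.
Qed.

Lemma cyl_agree (A : set (nat -> bool)) : cylinder A ->
  exists n, forall w v, Omega w -> A v -> agree w v n -> A w.
Proof.
move=> [n [E [_ [_ ->]]]]; exists n => w v Ow [Ov Ev] wv; split => //.
by move/prefix_agree: wv => ->.
Qed.

Theorem corollary4p3 :
  (forall A : set (nat -> bool), A `<=` Omega ->
     (lower A /\ upper A <-> cylinder A)) /\
  (forall A : set (nat -> bool), A `<=` Omega ->
     lower A -> lower (Omega `\` A) -> cylinder A).
Proof.
have H1of : forall A : set (nat -> bool), lower A ->
    forall p, Omega p -> ~ A p -> exists m, forall w, Omega w -> agree w p m -> ~ A w.
  move=> A HA p Op nAp.
  have : ~ (\bigcap_(n in [set: nat]) approx A n) p by rewrite -HA.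
  move=> /existsNP [n /not_implyP [_ Hn]]; exists n => w Ow wp Aw; apply: Hn; split=> //.
  by exists w; split => // i ih; rewrite wp.
split.
- move=> A AO; split.
  + move=> [HL HU]; apply: key_cyl => //; apply: key => //; first exact: H1of.
    move=> p Ap; apply: not_approx_compl.
    have : (\bigcup_(n in [set: nat]) (Omega `\` approx (Omega `\` A) n)) p by rewrite -HU.
    by move=> [n _ [_ Hn]]; exists n.
  + move=> Hc; have [n Hn] := cyl_agree _ Hc; split.
    * apply/seteqP; split => w /=.
        by move=> Aw i _; split; [apply: AO|exists w].
      move=> Hw; have [Ow [v [Av wv]]] := Hw n I.
      apply: (Hn w v) => // i ih; exact: wv.
    * apply/seteqP; split => w /=.
        move=> Aw; exists n => //; split; first by apply: AO.
        move=> [Ow [v [[Ov nAv] wv]]]; apply: nAv; apply: (Hn v w) => // i ih.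
        by rewrite wv.
      move=> [k _ [Ow Hk]]; apply: NNPP => nAw; apply: Hk; split=> //.
      by exists w.
- move=> A AO HL HC; apply: key_cyl => //; apply: key => //; first exact: H1of.
  move=> p Ap; apply: not_approx_compl.
  have : ~ (\bigcap_(n in [set: nat]) approx (Omega `\` A) n) p.
    by rewrite -HC => -[].
  by move=> /existsNP [n /not_implyP [_ Hn]]; exists n.
Qed.
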